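(* Let $\varphi\colon M\rightarrow N$ be a homomorphism of monoids such that $N$ is locally finite and the trace $\mathrm{tr}_{\varphi}(n_1,n_2)$ is locally finite for all $n_1,n_2\in N$. Then $M$ is locally finite.
   Context: A monoid is locally finite if all its finitely generated submonoids are finite. For a monoid homomorphism $\varphi\colon M\to N$ and $(n_1,n_2)\in N\times N$, the trace $\mathrm{tr}_{\varphi}(n_1,n_2)$ is the quotient of the submonoid $\{m\in M\mid n_1\varphi(m)=n_1,\ \varphi(m)n_2=n_2\}$ of $M$ by the congruence $\equiv$ defined by $m\equiv m'$ if and only if $m_1mm_2=m_1m'm_2$ for all $m_1\in\varphi^{-1}(n_1)$ and all $m_2\in\varphi^{-1}(n_2)$. *)

(* Defs.v *)
From Stdlib Require Import List.
Import ListNotations.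
Set Implicit Arguments.

Record monoid := Monoid {
  carrier :> Type;
  mop : carrier -> carrier -> carrier;
  munit : carrier;
  mopA : forall x y z, mop x (mop y z) = mop (mop x y) z;
  mop1l : forall x, mop munit x = x;
  mop1r : forall x, mop x munit = x
}.
Arguments mop {m}.
Arguments munit {m}.

Definition is_hom {M N : monoid} (f : M -> N) : Prop :=
  f munit = munit /\ forall x y, f (mop x y) = mop (f x) (f y).

Inductive gen {M : monoid} (s : list M) : M -> Prop :=
| gen_unit : gen s (@munit M)
| gen_elt : forall x, In x s -> gen s x
| gen_mul : forall x y, gen s x -> gen s y -> gen s (mop x y).

(* Local finiteness of the quotient monoid  S / eqv,  where S = {m | P m} is a
   submonoid of M and eqv a congruence on S.  Written out: for every finite
   family of elements of S, the submonoid of S/eqv generated by their classes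
   is finite, i.e. the submonoid of S they generate meets only finitely many
   eqv-classes (the list t gives representatives of those classes). *)
Definition locally_finite_quot {M : monoid} (P : M -> Prop)
    (eqv : M -> M -> Prop) : Prop :=
  forall s : list M, (forall x, In x s -> P x) ->
    exists t : list M, forall x, gen s x -> exists y, In y t /\ eqv x y.

Definition locally_finite (M : monoid) : Prop :=
  forall s : list M, exists t : list M, forall x, gen s x -> In x t.

Definition trace_sub {M N : monoid} (phi : M -> N) (n1 n2 : N) (m : M) : Prop :=
  mop n1 (phi m) = n1 /\ mop (phi m) n2 = n2.

Definition trace_equiv {M N : monoid} (phi : M -> N) (n1 n2 : N)
    (m m' : M) : Prop :=
  forall m1 m2 : M, phi m1 = n1 -> phi m2 = n2 ->
    mop (mop m1 m) m2 = mop (mop m1 m') m2.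

Definition trace_locally_finite {M N : monoid} (phi : M -> N) (n1 n2 : N) : Prop :=
  locally_finite_quot (trace_sub phi n1 n2) (trace_equiv phi n1 n2).

(* Main.v *)
Require Import Defs.
From Stdlib Require Import List Classical Lia.
Import ListNotations.

Section Proof1.
Variables (M N : monoid) (phi : M -> N).
Hypothesis Hhom : is_hom phi.
Variable s : list M.

Definition ev (u : list M) : M := fold_right (fun a b => mop a b) munit u.
Definition th (u : list M) : N := phi (ev u).

Lemma ev_app a b : ev (a ++ b) = mop (ev a) (ev b).
Proof.
  induction a as [|x a IH]; simpl.
  - now rewrite mop1l.
  - unfold ev in *; simpl. rewrite IH. apply mopA.
Qed.

Lemma phim x y : phi (mop x y) = mop (phi x) (phi y).
Proof. apply (proj2 Hhom). Qed.

Lemma th_app a b : th (a ++ b) = mop (th a) (th b).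
Proof. unfold th. rewrite ev_app. apply phim. Qed.

Definition pr (n1 n2 : N) (a b : list M) : N * N := (mop n1 (th a), mop (th b) n2).

Definition internal (C : list (N * N)) (n1 n2 : N) (u : list M) : Prop :=
  forall a b, u = a ++ b -> a <> [] -> b <> [] -> In (pr n1 n2 a b) C.

Definition ins (u : list M) := forall x, In x u -> In x s.

Definition wk n1 n2 (v : M) (u : list M) :=
  mop n1 (phi v) = mop n1 (th u) /\ mop (phi v) n2 = mop (th u) n2.

Definition TE := trace_equiv phi.

Definition Claim (C : list (N * N)) : Prop :=
  forall n1 n2, exists L : list M, forall u, ins u -> internal C n1 n2 u ->
    exists v, In v L /\ TE n1 n2 (ev u) v /\ wk n1 n2 v u.

Lemma internal_left C n1 n2 a b :
  internal C n1 n2 (a ++ b) -> internal C n1 (mop (th b) n2) a.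
Proof.
  intros H a1 a2 E H1 H2. subst a.
  specialize (H a1 (a2 ++ b) (eq_sym (app_assoc _ _ _)) H1
    ltac:(destruct a2; simpl; congruence)).
  unfold pr in *. rewrite th_app, <- mopA in H. exact H.
Qed.

Lemma internal_right C n1 n2 a b :
  a <> [] -> internal C n1 n2 (a ++ b) -> internal C (mop n1 (th a)) n2 b.
Proof.
  intros Ha H b1 b2 E H1 H2. subst b.
  specialize (H (a ++ b1) b2 (app_assoc _ _ _)
    ltac:(destruct a; simpl; congruence) H2).
  unfold pr in *. rewrite th_app, mopA in H. exact H.
Qed.

Lemma ins_app a b : ins (a ++ b) -> ins a /\ ins b.
Proof. unfold ins; intros H; split; intros; apply H; apply in_or_app; auto. Qed.

Lemma internal_drop c C n1 n2 u :
  internal (c :: C) n1 n2 u ->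
  ~ (exists a b, u = a ++ b /\ a <> [] /\ b <> [] /\ pr n1 n2 a b = c) ->
  internal C n1 n2 u.
Proof.
  intros H Hn a b E Ha Hb. destruct (H a b E Ha Hb) as [e|i]; auto.
  exfalso; apply Hn; eauto 10.
Qed.

Lemma TE_refl n1 n2 x : TE n1 n2 x x.
Proof. intros m1 m2 _ _; reflexivity. Qed.
Lemma TE_sym n1 n2 x y : TE n1 n2 x y -> TE n1 n2 y x.
Proof. intros H m1 m2 H1 H2; symmetry; auto. Qed.
Lemma TE_trans n1 n2 x y z : TE n1 n2 x y -> TE n1 n2 y z -> TE n1 n2 x z.
Proof. intros H H' m1 m2 H1 H2; rewrite H; auto. Qed.

Lemma len_lt_l (a b : list M) : b <> [] -> length a < length (a ++ b).
Proof. intros Hb; rewrite length_app; destruct b; [congruence|simpl; lia]. Qed.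
Lemma len_lt_r (a b : list M) : a <> [] -> length b < length (a ++ b).
Proof. intros Ha; rewrite length_app; destruct a; [congruence|simpl; lia]. Qed.

Lemma gen_sub n1 n2 (L : list M) :
  (forall x, In x L -> trace_sub phi n1 n2 x) ->
  forall p, gen L p -> trace_sub phi n1 n2 p.
Proof.
  intros HL p G; induction G as [|x Hx|x y _ [A1 A2] _ [B1 B2]].
  - unfold trace_sub; rewrite (proj1 Hhom), mop1r, mop1l; auto.
  - auto.
  - unfold trace_sub; rewrite phim; split.
    + rewrite mopA, A1; auto.
    + rewrite <- mopA, B2; auto.
Qed.

Lemma filter_ex (P : M -> Prop) (l : list M) :
  exists l', forall x, In x l' <-> In x l /\ P x.
Proof.
  induction l as [|y l [l' H]].
  - exists []; simpl; tauto.
  - destruct (classic (P y)).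
    + exists (y :: l'); intros x; simpl; rewrite H; intuition congruence.
    + exists l'; intros x; simpl; rewrite H; intuition congruence.
Qed.

Lemma first_split (P : list M -> list M -> Prop) u :
  (exists a b, u = a ++ b /\ a <> [] /\ b <> [] /\ P a b) ->
  exists a b, u = a ++ b /\ a <> [] /\ b <> [] /\ P a b /\
    forall a1 a2, a = a1 ++ a2 -> a1 <> [] -> a2 <> [] -> ~ P a1 (a2 ++ b).
Proof.
  intros [a [b H]].
  assert (G : forall n a b, length a <= n -> u = a ++ b /\ a <> [] /\ b <> [] /\ P a b ->
    exists a b, u = a ++ b /\ a <> [] /\ b <> [] /\ P a b /\
    forall a1 a2, a = a1 ++ a2 -> a1 <> [] -> a2 <> [] -> ~ P a1 (a2 ++ b)).
  { induction n as [|n IH]; intros a0 b0 Hl [E [Ha [Hb Hp]]].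
    - destruct a0; simpl in Hl; [congruence|lia].
    - destruct (classic (exists a1 a2, a0 = a1 ++ a2 /\ a1 <> [] /\ a2 <> [] /\ P a1 (a2 ++ b0)))
        as [[a1 [a2 [E' [H1 [H2 H3]]]]]|Hn].
      + apply (IH a1 (a2 ++ b0)).
        * subst a0. pose proof (len_lt_l a1 a2 H2). lia.
        * subst. repeat split; auto. symmetry; apply app_assoc.
          destruct a2; simpl; congruence.
      + exists a0, b0; repeat split; auto. intros a1 a2 E1 H1 H2 Hp1.
        apply Hn; eauto 10. }
  apply (G (length a) a b); auto.
Qed.

Hypothesis Htr : forall n1 n2 : N, trace_locally_finite phi n1 n2.

Lemma claim_nil : Claim [].
Proof.
  intros n1 n2. exists (munit :: s). intros u Hu Hi. exists (ev u).
  split; [|split; [apply TE_refl| split; reflexivity]].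
  destruct u as [|a [|b u]].
  - left; reflexivity.
  - right; unfold ev; simpl; rewrite mop1r; apply Hu; left; auto.
  - exfalso. apply (Hi [a] (b :: u)); auto; discriminate.
Qed.

Lemma phi_ev u : phi (ev u) = th u.
Proof. reflexivity. Qed.

Lemma lemB C' c1 c2 Lm L' :
  (forall u, ins u -> internal C' c1 c2 u -> exists v, In v Lm /\ TE c1 c2 (ev u) v /\ wk c1 c2 v u) ->
  (forall x, In x L' <-> In x Lm /\ trace_sub phi c1 c2 x) ->
  forall w, ins w -> internal ((c1,c2)::C') c1 c2 w -> mop c1 (th w) = c1 -> mop (th w) c2 = c2 ->
  exists p, gen L' p /\ TE c1 c2 (ev w) p.
Proof.
  intros HI HL.
  assert (HS : forall x, In x L' -> trace_sub phi c1 c2 x) by (intros; apply HL; auto).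
  assert (G : forall n w, length w <= n -> ins w -> internal ((c1,c2)::C') c1 c2 w ->
    mop c1 (th w) = c1 -> mop (th w) c2 = c2 -> exists p, gen L' p /\ TE c1 c2 (ev w) p).
  2: intros w; apply (G (length w) w); auto.
  induction n as [|n IHn]; intros w Hl Hw Hi H1 H2.
  - destruct (classic (exists a b, w = a ++ b /\ a <> [] /\ b <> [] /\ pr c1 c2 a b = (c1,c2)))
      as [[a [b [E [Ha [Hb _]]]]]|Hn].
    + subst w. pose proof (len_lt_l a b Hb); lia.
    + destruct (HI w Hw (internal_drop _ _ _ _ _ Hi Hn)) as [v [Hv [Te [W1 W2]]]].
      exists v; split; auto. apply gen_elt. apply HL; split; auto.
      split; congruence.
  - destruct (classic (exists a b, w = a ++ b /\ a <> [] /\ b <> [] /\ pr c1 c2 a b = (c1,c2)))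
      as [[a [b [E [Ha [Hb Hp]]]]]|Hn].
    + subst w. unfold pr in Hp. injection Hp as Hp1 Hp2.
      destruct (ins_app _ _ Hw) as [Hwa Hwb].
      pose proof (internal_left _ _ _ _ _ Hi) as Ia. rewrite Hp2 in Ia.
      pose proof (internal_right _ _ _ _ _ Ha Hi) as Ib. rewrite Hp1 in Ib.
      rewrite th_app in H1, H2.
      assert (Ea2 : mop (th a) c2 = c2) by (transitivity (mop (th a) (mop (th b) c2)); [rewrite Hp2; reflexivity | rewrite mopA; exact H2]).
      assert (Eb1 : mop c1 (th b) = c1) by (transitivity (mop (mop c1 (th a)) (th b)); [rewrite Hp1; reflexivity | rewrite <- mopA; exact H1]).
      pose proof (len_lt_l a b Hb). pose proof (len_lt_r a b Ha).
      destruct (IHn a ltac:(lia) Hwa Ia Hp1 Ea2) as [p1 [G1 T1]].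
      destruct (IHn b ltac:(lia) Hwb Ib Eb1 Hp2) as [p2 [G2 T2]].
      exists (mop p1 p2); split; [apply gen_mul; auto|].
      intros m1 m2 F1 F2. rewrite ev_app.
      assert (S1 := T1 m1 (mop (ev b) m2) F1 ltac:(rewrite phim, phi_ev, F2; exact Hp2)).
      assert (S2 := T2 (mop m1 p1) m2 ltac:(rewrite phim, F1; apply (gen_sub _ _ _ HS _ G1)) F2).
      do 3 rewrite ?mopA in S1. do 3 rewrite ?mopA in S2. rewrite ?mopA. rewrite S1, S2. reflexivity.
    + destruct (HI w Hw (internal_drop _ _ _ _ _ Hi Hn)) as [v [Hv [Te [W1 W2]]]].
      exists v; split; auto. apply gen_elt. apply HL; split; auto.
      split; congruence.
Qed.

Lemma lemLeft C' c1 c2 n2 Lm L' Lz :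
  (forall u, ins u -> internal C' c1 c2 u -> exists v, In v Lm /\ TE c1 c2 (ev u) v /\ wk c1 c2 v u) ->
  (forall x, In x L' <-> In x Lm /\ trace_sub phi c1 c2 x) ->
  (forall u, ins u -> internal C' c1 n2 u -> exists v, In v Lz /\ TE c1 n2 (ev u) v /\ wk c1 n2 v u) ->
  forall r, ins r -> internal ((c1,c2)::C') c1 n2 r -> mop (th r) n2 = c2 ->
  exists p z, gen L' p /\ In z Lz /\ mop c1 (phi z) = mop c1 (th r) /\ mop (phi z) n2 = c2 /\
    TE c1 n2 (ev r) (mop p z).
Proof.
  intros HIm HL HIz.
  assert (HS : forall x, In x L' -> trace_sub phi c1 c2 x) by (intros; apply HL; auto).
  assert (G : forall n r, length r <= n -> ins r -> internal ((c1,c2)::C') c1 n2 r -> mop (th r) n2 = c2 ->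
    exists p z, gen L' p /\ In z Lz /\ mop c1 (phi z) = mop c1 (th r) /\ mop (phi z) n2 = c2 /\
    TE c1 n2 (ev r) (mop p z)).
  2: intros r; apply (G (length r) r); auto.
  induction n as [|n IHn]; intros r Hl Hr Hi H2;
  (destruct (classic (exists a b, r = a ++ b /\ a <> [] /\ b <> [] /\ pr c1 n2 a b = (c1,c2)))
      as [[w [r' [E [Ha [Hb Hp]]]]]|Hn];
   [| destruct (HIz r Hr (internal_drop _ _ _ _ _ Hi Hn)) as [v [Hv [Te [W1 W2]]]];
      exists munit, v; repeat split; auto; [apply gen_unit | congruence |];
      intros m1 m2 F1 F2; rewrite mop1l; apply Te; auto]).
  - subst r. pose proof (len_lt_l w r' Hb); lia.
  - subst r. unfold pr in Hp. injection Hp as Hp1 Hp2.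
    destruct (ins_app _ _ Hr) as [Hwa Hwb].
    pose proof (internal_left _ _ _ _ _ Hi) as Ia. rewrite Hp2 in Ia.
    pose proof (internal_right _ _ _ _ _ Ha Hi) as Ib. rewrite Hp1 in Ib.
    rewrite th_app in H2.
    assert (Ea2 : mop (th w) c2 = c2) by (transitivity (mop (th w) (mop (th r') n2)); [rewrite Hp2; reflexivity | rewrite mopA; exact H2]).
    pose proof (len_lt_r w r' Ha).
    destruct (lemB C' c1 c2 Lm L' HIm HL w Hwa Ia Hp1 Ea2) as [p1 [G1 T1]].
    destruct (IHn r' ltac:(lia) Hwb Ib Hp2) as [p2 [z [G2 [Hz [Z1 [Z2 T2]]]]]].
    exists (mop p1 p2), z; repeat split; auto.
    + apply gen_mul; auto.
    + rewrite Z1, th_app, mopA, Hp1; reflexivity.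
    + intros m1 m2 F1 F2. rewrite ev_app.
      assert (S1 := T1 m1 (mop (ev r') m2) F1 ltac:(rewrite phim, phi_ev, F2; exact Hp2)).
      assert (S2 := T2 (mop m1 p1) m2 ltac:(rewrite phim, F1; apply (gen_sub _ _ _ HS _ G1)) F2).
      do 3 rewrite ?mopA in S1. do 3 rewrite ?mopA in S2. rewrite ?mopA. rewrite S1, S2. reflexivity.
Qed.

Lemma rep_ex n1 n2 (G : M -> Prop) t :
  exists t'', (forall g, In g t'' -> G g) /\
    forall y, In y t -> (exists g, G g /\ TE n1 n2 g y) -> exists g, In g t'' /\ TE n1 n2 g y.
Proof.
  induction t as [|y t [t'' [H1 H2]]].
  - exists []; split; simpl; tauto.
  - destruct (classic (exists g, G g /\ TE n1 n2 g y)) as [[g [Gg Tg]]|Hn].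
    + exists (g :: t''); split.
      * intros g' [<-|Hi]; auto.
      * intros y' [<-|Hi] Hex; [exists g; split; auto; left; auto|].
        destruct (H2 y' Hi Hex) as [g' [Hg' Tg']]; exists g'; split; auto; right; auto.
    + exists t''; split; auto.
      intros y' [<-|Hi] Hex; [contradiction|auto].
Qed.

Lemma claim_cons c C' : Claim C' -> Claim (c :: C').
Proof.
  destruct c as [c1 c2]. intros IH n1 n2.
  destruct (IH n1 n2) as [L0 H0], (IH n1 c2) as [Lx Hx], (IH c1 c2) as [Lm Hm], (IH c1 n2) as [Lz Hz].
  destruct (filter_ex (trace_sub phi c1 c2) Lm) as [L' HL'].
  assert (HS : forall x, In x L' -> trace_sub phi c1 c2 x) by (intros; apply HL'; auto).
  destruct (Htr c1 c2 L' HS) as [t Ht].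
  destruct (rep_ex c1 c2 (gen L') t) as [t'' [Ht1 Ht2]].
  assert (Hrep : forall p, gen L' p -> exists g, In g t'' /\ TE c1 c2 p g).
  { intros p Gp. destruct (Ht p Gp) as [y [Hy Ty]].
    destruct (Ht2 y Hy (ex_intro _ p (conj Gp Ty))) as [g [Hg Tg]].
    exists g; split; auto. eapply TE_trans; [exact Ty| apply TE_sym; exact Tg]. }
  exists (L0 ++ flat_map (fun x => flat_map (fun g => map (fun z => mop (mop x g) z) Lz) t'') Lx).
  intros u Hu Hi.
  destruct (classic (exists a b, u = a ++ b /\ a <> [] /\ b <> [] /\ pr n1 n2 a b = (c1,c2)))
    as [Hex|Hn].
  2: { destruct (H0 u Hu (internal_drop _ _ _ _ _ Hi Hn)) as [v [Hv R]].
       exists v; split; auto; apply in_or_app; left; auto. }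
  destruct (first_split (fun a b => pr n1 n2 a b = (c1,c2)) u Hex)
    as [x [r [E [Hxn [Hrn [Hp Hmin]]]]]].
  subst u. destruct (ins_app _ _ Hu) as [Hux Hur].
  pose proof Hp as Hp'. unfold pr in Hp'. injection Hp' as Hp1 Hp2.
  assert (Ix : internal C' n1 c2 x).
  { intros a1 a2 E1 H1 H2.
    pose proof (internal_left _ _ _ _ _ Hi a1 a2 E1 H1 H2) as I. unfold pr in I |- *. rewrite Hp2 in I.
    destruct I as [e|i]; auto. exfalso.
    apply (Hmin a1 a2 E1 H1 H2). rewrite e. unfold pr.
    rewrite th_app, <- mopA, Hp2. reflexivity. }
  destruct (Hx x Hux Ix) as [x' [Hx' [Tx [W1 W2]]]].
  pose proof (internal_right _ _ _ _ _ Hxn Hi) as Ir. rewrite Hp1 in Ir.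
  destruct (lemLeft C' c1 c2 n2 Lm L' Lz Hm HL' Hz r Hur Ir Hp2)
    as [p [z [Gp [Hz' [Z1 [Z2 Tr]]]]]].
  destruct (Hrep p Gp) as [g [Hg Tg]].
  pose proof (Ht1 g Hg) as Gg. destruct (gen_sub _ _ _ HS g Gg) as [G1 G2].
  exists (mop (mop x' g) z). split; [|split].
  - apply in_or_app; right. apply in_flat_map; exists x'; split; auto.
    apply in_flat_map; exists g; split; auto. apply in_map_iff; exists z; auto.
  - intros m1 m2 F1 F2. rewrite ev_app.
    assert (S1 := Tx m1 (mop (ev r) m2) F1 ltac:(rewrite phim, phi_ev, F2; exact Hp2)).
    assert (E1 : phi (mop m1 x') = c1) by (rewrite phim, F1, W1; exact Hp1).
    assert (S2 := Tr (mop m1 x') m2 E1 F2).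
    assert (S3 := Tg (mop m1 x') (mop z m2) E1 ltac:(rewrite phim, F2; exact Z2)).
    do 3 rewrite ?mopA in S1. do 3 rewrite ?mopA in S2. do 3 rewrite ?mopA in S3. rewrite ?mopA. rewrite S1, S2, S3. reflexivity.
  - split.
    + rewrite !phim, th_app, !mopA, W1, Hp1, G1, Z1. reflexivity.
    + rewrite !phim, th_app, <- !mopA, Z2, G2, Hp2, W2. reflexivity.
Qed.

Lemma gen_word x : gen s x ->
  exists u, ins u /\ ev u = x.
Proof.
  intros G; induction G as [|x Hx|x y _ [u [Hu Eu]] _ [w [Hw Ew]]].
  - exists []; split; [intros y []|reflexivity].
  - exists [x]; split; [intros y [<-|[]]; auto|unfold ev; simpl; apply mop1r].
  - exists (u ++ w); split.
    + intros z Hz; apply in_app_or in Hz; destruct Hz; auto.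
    + rewrite ev_app; congruence.
Qed.

Hypothesis HN : locally_finite N.

Lemma final : exists t : list M, forall x, gen s x -> In x t.
Proof.
  destruct (HN (map phi s)) as [T HT].
  assert (Hth : forall u, ins u -> In (th u) T).
  { intros u Hu; apply HT. induction u as [|a u IHu].
    - unfold th, ev; simpl; rewrite (proj1 Hhom); apply gen_unit.
    - unfold th, ev in *; simpl. rewrite phim.
      apply gen_mul; [apply gen_elt, in_map; apply Hu; left; auto|].
      apply IHu; intros y Hy; apply Hu; right; auto. }
  assert (HC : forall C, Claim C).
  { induction C as [|c C IH]; [apply claim_nil | apply claim_cons; auto]. }
  destruct (HC (list_prod T T) munit munit) as [L HL].
  exists L. intros x Gx. destruct (gen_word x Gx) as [u [Hu Eu]].
  destruct (HL u Hu) as [v [Hv [Te _]]].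
  - intros a b E Ha Hb. subst u. destruct (ins_app _ _ Hu) as [Ha' Hb'].
    unfold pr. rewrite mop1l, mop1r. apply in_prod; apply Hth; auto.
  - assert (Q := Te munit munit (proj1 Hhom) (proj1 Hhom)).
    rewrite !mop1l, !mop1r in Q. congruence.
Qed.

End Proof1.

Theorem theorem2p1 (M N : monoid) (phi : M -> N) :
  is_hom phi ->
  locally_finite N ->
  (forall n1 n2 : N, trace_locally_finite phi n1 n2) ->
  locally_finite M.
Proof.
  intros Hh HN Htr s. exact (final M N phi Hh s Htr HN).
Qed.
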